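(* Let $p\geq 3$ be prime and $n\geq 2$. Then in $\mathbb{L}_p$, \[\left(\sum_{l=0}^{p-1}\frac{(-1)^{ln}}{l!}\zeta_{2(p-1)}^l p^{\frac{l}{p^{n-1}(p-1)}}\right)^{p^{n-1}}-1=\sum_{l=1}^{p-1}\frac{(-1)^l}{[l!]}\zeta_{2(p-1)}^l p^{\frac{l}{p-1}}+\zeta_{2(p-1)}\, p^{1+\frac{1}{p(p-1)}}+O\left(p^{1+\frac{1}{p-1}}\right).\]
   Context: $\mathbb{L}_p$ is the $p$-adic Mal'cev–Neumann field of formal sums $\sum_{x\in\mathbb{Q}}[\alpha_x]p^x$ ($\alpha_x\in\bar{\mathbb{F}}_p$, $[\cdot]$ Teichmüller lift into $W(\bar{\mathbb{F}}_p)$, well-ordered support), containing $\mathbb{Q}_p$, with valuation $v_p$ = minimum of support; $p^x$ is the element with support $\{x\}$ and coefficient $1$. $\zeta_{2(p-1)}$ is (the Teichmüller lift of) a fixed primitive $2(p-1)$-th root of unity in $\bar{\mathbb{F}}_p$. $l!$ is the ordinary factorial (a rational number), while $[l!]$ is the Teichmüller lift of $l!\bmod p$. Notation: $\alpha=\beta+O(p^x)$ means $v_p(\alpha-\beta)\geq x$. *)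

(* Defs.v *)
From HB Require Import structures.
From mathcomp Require Import all_boot all_order all_algebra.
Set Implicit Arguments. Unset Strict Implicit. Unset Printing Implicit Defensive.
Import Order.TTheory GRing.Theory Num.Theory.
Local Open Scope ring_scope.

Definition padic_val (p : nat) (q : rat) : rat :=
  ((logn p `|numq q|%N)%:Z - (logn p `|denq q|%N)%:Z)%:~R.

(* Abstract interface for the part of the p-adic Mal'cev--Neumann field L_p
   used in the statement: a field K with a valuation v (meaningful on nonzero
   elements) extending v_p on Q, and the family x |-> p^x of elements with
   p^(x+y) = p^x p^y, p^1 = p, v(p^x) = x. *)
Definition Lp_model (p : nat) (K : fieldType) (v : K -> rat) (pw : rat -> K)
  : Prop :=
  [/\ (forall a b : K, a != 0 -> b != 0 -> v (a * b) = v a + v b) /\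
      (forall a b : K, a != 0 -> b != 0 -> a + b != 0 ->
        Num.min (v a) (v b) <= v (a + b)),
      forall q : rat, q != 0 -> ratr q != 0 :> K /\ v (ratr q) = padic_val p q,
      forall x y : rat, pw (x + y) = pw x * pw y,
      pw 1 = p%:R &
      forall x : rat, pw x != 0 /\ v (pw x) = x].

(* alpha = O(p^x), i.e. v(alpha) >= x (with v(0) = +oo). *)
Definition bigO (K : fieldType) (v : K -> rat) (a : K) (x : rat) : Prop :=
  a = 0 \/ x <= v a.

(* t is the Teichmueller lift of the residue of r mod p (r prime to p):
   a (p-1)-th root of unity congruent to r modulo p. *)
Definition teich_of (p : nat) (K : fieldType) (v : K -> rat) (r : nat) (t : K)
  : Prop :=
  t ^+ (p - 1) = 1 /\ bigO v (t - r%:R) 1.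

(* Main.v *)
Require Import Defs.
From HB Require Import structures.
From mathcomp Require Import all_boot all_order all_algebra ring lra zify.
Import Order.TTheory GRing.Theory Num.Theory.
Local Open Scope ring_scope.

Module Helpers.
Set Implicit Arguments. Unset Strict Implicit. Unset Printing Implicit Defensive.
Section Val.
Variables (p : nat) (K : fieldType) (v : K -> rat) (pw : rat -> K).
Hypothesis pp : prime p.
Hypothesis HL : Lp_model p v pw.

Notation O := (bigO v).

Lemma vM a b : a != 0 -> b != 0 -> v (a * b) = v a + v b.
Proof. by case: HL => [[H _] _ _ _ _]; apply: H. Qed.

Lemma vD a b : a != 0 -> b != 0 -> a + b != 0 -> Num.min (v a) (v b) <= v (a + b).
Proof. by case: HL => [[_ H] _ _ _ _]; apply: H. Qed.

Lemma self_add (x y : rat) : x = x + y -> y = 0.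
Proof. by move=> H; apply: (@addrI _ x); rewrite addr0 -H. Qed.

Lemma v1 : v 1 = 0.
Proof.
have := vM (oner_neq0 K) (oner_neq0 K); rewrite mulr1.
exact: self_add.
Qed.

Lemma O0 c : O 0 c. Proof. by left. Qed.

Lemma Ole a c d : O a c -> d <= c -> O a d.
Proof. by case=> [->|H] Hd; [left|right; apply: le_trans H]. Qed.

Lemma OD a b c : O a c -> O b c -> O (a + b) c.
Proof.
case=> [->|Ha]; first by rewrite add0r.
case=> [->|Hb]; first by rewrite addr0; right.
have [->|abn] := eqVneq (a + b) 0; first by left.
have [a0|an] := eqVneq a 0; first by rewrite a0 add0r; right.
have [b0|bn] := eqVneq b 0; first by rewrite b0 addr0; right.
right; apply: le_trans (vD an bn abn).
by rewrite le_min Ha Hb.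
Qed.

Lemma OM a b c d : O a c -> O b d -> O (a * b) (c + d).
Proof.
case=> [->|Ha]; first by rewrite mul0r; left.
case=> [->|Hb]; first by rewrite mulr0; left.
have [->|abn] := eqVneq (a * b) 0; first by left.
have an : a != 0 by apply/eqP=> a0; rewrite a0 mul0r eqxx in abn.
have bn : b != 0 by apply/eqP=> b0; rewrite b0 mulr0 eqxx in abn.
by right; rewrite vM // lerD.
Qed.

Lemma vN1 : v (-1) = 0.
Proof.
have n1 : (-1 : K) != 0 by rewrite oppr_eq0 oner_neq0.
have := vM n1 n1; rewrite mulrNN mulr1 v1 => /eqP.
by rewrite eq_sym -mulr2n -mulr_natr mulf_eq0 orbF => /eqP.
Qed.

Lemma ON a c : O a c -> O (- a) c.
Proof.
move=> H; rewrite -mulN1r.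
have H1 : O (-1) 0 by right; rewrite vN1.
by apply: Ole (OM H1 H) _; rewrite add0r.
Qed.

Lemma OB a b c : O a c -> O b c -> O (a - b) c.
Proof. by move=> Ha Hb; apply: OD Ha (ON Hb). Qed.

Lemma OX a c k : O a c -> O (a ^+ k) (k%:R * c).
Proof.
move=> H; elim: k => [|k IH]; first by right; rewrite v1 mul0r.
by rewrite exprS -{1}add1n natrD mulrDl mul1r; apply: OM.
Qed.

Lemma OX0 a k : O a 0 -> O (a ^+ k) 0.
Proof. by move/(OX k); rewrite mulr0. Qed.

Lemma Osum (I : Type) (r : seq I) (P : pred I) (F : I -> K) c :
  (forall i, P i -> O (F i) c) -> O (\sum_(i <- r | P i) F i) c.
Proof.
move=> H; elim/big_rec: _ => [|i x Pi Hx]; first exact: O0.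
by apply: OD => //; apply: H.
Qed.

Lemma OMn a c k : O a c -> O (a *+ k) c.
Proof.
move=> H; elim: k => [|k IH]; first by rewrite mulr0n; left.
by rewrite mulrS; apply: OD.
Qed.

Lemma vV a : a != 0 -> v (a^-1) = - v a.
Proof.
move=> an; have ain : a^-1 != 0 by rewrite invr_eq0.
have := vM an ain; rewrite mulfV // v1 => H.
by apply/eqP; rewrite -subr_eq0 opprK addrC -H.
Qed.

Lemma vnat m : (0 < m)%N -> (m%:R : K) != 0 /\ v m%:R = (logn p m)%:R.
Proof.
move=> m0; case: HL => [_ H _ _ _].
have mq : (m%:R : rat) != 0 by rewrite pnatr_eq0 -lt0n.
have [H1 H2] := H _ mq; rewrite ratr_nat in H1 H2; split => //.
rewrite H2 /padic_val.
have -> : (m%:R : rat) = (m%:Z)%:~R by [].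
rewrite numq_int denq_int /= logn1 subr0.
by [].
Qed.

Lemma Onat m : (p %| m)%N -> O (m%:R) 1.
Proof.
move=> pm; have [->|m0] := posnP m; first by left.
right; have [_ ->] := vnat m0; rewrite ler1n logn_gt0 mem_primes pp m0 pm //.
Qed.

Lemma vnat0 m : ~~ (p %| m)%N -> (m%:R : K) != 0 /\ v m%:R = 0.
Proof.
move=> pm; have m0 : (0 < m)%N by case: m pm => //; rewrite dvdn0.
have [H1 ->] := vnat m0; split => //.
by rewrite logn_coprime // prime_coprime.
Qed.

Lemma vp : v p%:R = 1.
Proof.
have [_ ->] := vnat (prime_gt0 pp).
by rewrite logn_prime // eqxx.
Qed.

End Val.

Section Poly.
Variables (p : nat) (K : fieldType) (v : K -> rat) (pw : rat -> K).
Hypothesis pp : prime p.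
Hypothesis HL : Lp_model p v pw.

Notation O := (bigO v).
Definition polyO (P : {poly K}) c := forall i, O P`_i c.

Lemma pO0 c : polyO 0 c. Proof. by move=> i; rewrite coef0; left. Qed.
Lemma pOD P Q c : polyO P c -> polyO Q c -> polyO (P + Q) c.
Proof. by move=> HP HQ i; rewrite coefD; apply: (OD HL). Qed.
Lemma pON P c : polyO P c -> polyO (- P) c.
Proof. by move=> HP i; rewrite coefN; apply: (ON HL). Qed.
Lemma pOB P Q c : polyO P c -> polyO Q c -> polyO (P - Q) c.
Proof. by move=> HP HQ; apply: pOD HP (pON HQ). Qed.
Lemma pOle P c d : polyO P c -> d <= c -> polyO P d.
Proof. by move=> HP Hd i; apply: Ole (HP i) Hd. Qed.
Lemma pOZ a P c d : O a c -> polyO P d -> polyO (a *: P) (c + d).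
Proof. by move=> Ha HP i; rewrite coefZ; apply: (OM HL). Qed.
Lemma pOMn P c k : polyO P c -> polyO (P *+ k) c.
Proof. by move=> HP i; rewrite coefMn; apply: (OMn HL). Qed.
Lemma pOsum (I : Type) (r : seq I) (Pr : pred I) (F : I -> {poly K}) c :
  (forall i, Pr i -> polyO (F i) c) -> polyO (\sum_(i <- r | Pr i) F i) c.
Proof.
move=> H; elim/big_rec: _ => [|i x Pi Hx]; first exact: pO0.
by apply: pOD => //; apply: H.
Qed.
Lemma pOM P Q c d : polyO P c -> polyO Q d -> polyO (P * Q) (c + d).
Proof.
move=> HP HQ i; rewrite coefM; apply: (Osum HL) => j _.
exact: (OM HL).
Qed.
Lemma pO1 : polyO 1 0.
Proof. by move=> i; rewrite coef1; case: (i == 0)%N; [right; rewrite (v1 HL)|left]. Qed.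
Lemma pOXn k : polyO 'X^k 0.
Proof. by move=> i; rewrite coefXn; case: (i == k)%N; [right; rewrite (v1 HL)|left]. Qed.
Lemma pOX0 P k : polyO P 0 -> polyO (P ^+ k) 0.
Proof.
move=> HP; elim: k => [|k IH]; first exact: pO1.
by rewrite exprS; apply: pOle (pOM HP IH) _; rewrite addr0.
Qed.

Lemma pOfrob2 A B : polyO A 0 -> polyO B 0 -> polyO ((A + B) ^+ p - A ^+ p - B ^+ p) 1.
Proof.
move=> HA HB.
have p1 : (0 < p.-1)%N by rewrite -subn1 subn_gt0 prime_gt1.
rewrite exprDn; have -> : p = p.-1.+1 by rewrite prednK // prime_gt0.
rewrite big_ord_recr big_ord_recl /= subn0 subnn bin0 binn !mulr1n expr0 mulr1 mul1r.
set M := \sum_(i < _) _.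
have -> : A ^+ p.-1.+1 + M + B ^+ p.-1.+1 - A ^+ p.-1.+1 - B ^+ p.-1.+1 = M.
  by ring.
apply: pOsum => i _.
rewrite -scaler_nat.
have -> : (1 : rat) = 1 + 0 by rewrite addr0.
apply: pOZ; last by rewrite -(addr0 0); apply: pOM; apply: pOX0.
rewrite -[p.-1.+1]/(p.-1.+1)%N prednK ?prime_gt0 //.
apply: (Onat pp HL); apply: prime_dvd_bin => //.
rewrite /bump /=; case: i => i /= Hi.
by rewrite add1n -ltn_predRL.
Qed.

End Poly.

Section Frob.
Variables (p : nat) (K : fieldType) (v : K -> rat) (pw : rat -> K).
Hypothesis pp : prime p.
Hypothesis HL : Lp_model p v pw.

Notation O := (bigO v).
Notation polyO := (polyO v).

Lemma pOfrob_sum m (F : nat -> {poly K}) :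
  (forall i, (i < m)%N -> polyO (F i) 0) ->
  polyO ((\sum_(i < m) F i) ^+ p - \sum_(i < m) F i ^+ p) 1.
Proof.
elim: m => [|m IH] H.
  rewrite !big_ord0 expr0n /= gtn_eqF ?prime_gt0 // subr0; exact: pO0.
rewrite !big_ord_recr /=.
set A := \sum_(i < m) F i; set B := F m.
have -> : (A + B) ^+ p - (\sum_(i < m) F i ^+ p + B ^+ p)
  = ((A + B) ^+ p - A ^+ p - B ^+ p) + (A ^+ p - \sum_(i < m) F i ^+ p) by ring.
apply: (pOD HL); first apply: (pOfrob2 pp HL).
- by apply: (pOsum HL) => i _; apply: H; apply: (leq_trans (ltn_ord i)).
- exact: H.
by apply: IH => i Hi; apply: H; apply: (leq_trans Hi).
Qed.

Lemma pOfrob m (a : nat -> K) :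
  (forall i, (i < m)%N -> O (a i) 0) ->
  (forall i, (i < m)%N -> O (a i ^+ p - a i) 1) ->
  polyO ((\sum_(i < m) a i *: 'X^i) ^+ p - \sum_(i < m) a i *: 'X^(i * p)) 1.
Proof.
move=> H0 H1.
have -> : (\sum_(i < m) a i *: 'X^i) ^+ p - \sum_(i < m) a i *: 'X^(i * p)
  = ((\sum_(i < m) a i *: 'X^i) ^+ p - \sum_(i < m) (a i *: 'X^i) ^+ p)
    + \sum_(i < m) (a i ^+ p - a i) *: 'X^(i * p).
  have -> : \sum_(i < m) (a i ^+ p - a i) *: 'X^(i * p) =
     \sum_(i < m) (a i *: 'X^i) ^+ p - \sum_(i < m) a i *: 'X^(i * p).
    rewrite -sumrB; apply: eq_bigr => i _.
    by rewrite exprZn exprM scalerBl.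
  by ring.
apply: (pOD HL).
  have := (@pOfrob_sum m (fun i => a i *: 'X^i)); apply.
  by move=> i Hi; rewrite -(addr0 (0:rat)); apply: (pOZ HL); [apply: H0|apply: (pOXn HL)].
apply: (pOsum HL) => i _; rewrite -(addr0 (1:rat)); apply: (pOZ HL); [apply: H1 => //|apply: (pOXn HL)].
Qed.

Lemma fact_ndvd i : (i < p)%N -> ~~ (p %| i`!)%N.
Proof.
elim: i => [|i IH] Hi; first by rewrite fact0 dvdn1 neq_ltn prime_gt1 // orbT.
rewrite factS Euclid_dvdM // negb_or IH ?(ltnW Hi) // andbT.
apply/negP => /(dvdn_leq (ltn0Sn i)); rewrite leqNgt Hi.
by [].
Qed.

Definition a (i : nat) : K := (i`!%:R)^-1.

Lemma a_int i : (i < p)%N -> O (a i) 0.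
Proof.
move=> Hi; have [n0 v0] := vnat0 pp HL (fact_ndvd Hi).
by right; rewrite /a (vV HL n0) v0 oppr0.
Qed.

Lemma a_frob i : (i < p)%N -> O (a i ^+ p - a i) 1.
Proof.
move=> Hi; have [n0 v0] := vnat0 pp HL (fact_ndvd Hi).
set f : K := i`!%:R.
have le : (i`! <= i`! ^ p)%N.
  rewrite -{1}(prednK (prime_gt0 pp)) expnS leq_pmulr // expn_gt0 fact_gt0 //.
have -> : a i ^+ p - a i = - ((i`! ^ p - i`!)%N%:R) * (f^-1 ^+ p.+1).
  rewrite /a -/f natrB // natrX -/f exprS.
  have e1 : f * f^-1 = 1 by rewrite mulfV.
  have e2 : f ^+ p * f^-1 ^+ p = 1 by rewrite -exprMn e1 expr1n.
  by rewrite mulNr mulrBl opprB mulrA e1 mul1r mulrCA e2 mulr1.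
rewrite -(addr0 (1:rat)); apply: (OM HL); first apply: (ON HL).
  apply: (Onat pp HL); rewrite -eqn_mod_dvd //; apply/eqP; exact: fermat_little.
apply: (OX0 HL); exact: a_int.
Qed.

End Frob.

Section Der.
Variables (p : nat) (K : fieldType) (v : K -> rat) (pw : rat -> K).
Hypothesis pp : prime p.
Hypothesis HL : Lp_model p v pw.

Notation O := (bigO v).
Notation polyO := (polyO v).
Notation a := (@a K).

Lemma natr_neq0 m : (0 < m)%N -> (m%:R : K) != 0.
Proof. by move=> m0; have [] := vnat HL m0. Qed.

Lemma aS i : a i.+1 * i.+1%:R = a i.
Proof.
rewrite /a factS natrM invfM [_^-1 * _^-1]mulrC -mulrA mulVf ?mulr1 //.
exact: natr_neq0.
Qed.

Lemma a0 : a 0 = 1. Proof. by rewrite /a fact0 invr1. Qed.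
Lemma a1 : a 1 = 1. Proof. by rewrite /a invr1. Qed.

Definition s : {poly K} := \poly_(i < p) a i.
Definition sp : {poly K} := \sum_(i < p) a i *: 'X^(i * p).

Lemma s_deriv : s^`() = s - a p.-1 *: 'X^(p.-1).
Proof.
apply/polyP => i; rewrite coef_deriv coefB coefZ coefXn /s !coef_poly.
have p0 := prime_gt0 pp.
case: (ltngtP i.+1 p) => [Hi|Hi|Hi].
- have H2 : (i < p.-1)%N by rewrite ltn_predRL.
  by rewrite ltn_eqF // mulr0 subr0 -mulr_natr aS.
- rewrite mul0rn (_ : (i == p.-1) = false) ?mulr0 ?subr0 //.
  by apply/negbTE/eqP; lia.
- by rewrite mul0rn -Hi /= eqxx mulr1 subrr.
Qed.

Definition f := s ^+ p.

Lemma f_coef k : (k < p)%N -> f`_k = (p%:R) ^+ k * a k.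
Proof.
elim: k => [|k IH] Hk.
  rewrite expr0 mul1r a0 -horner_coef0 /f horner_exp horner_coef0 /s coef_poly.
  by rewrite prime_gt0 // a0 expr1n.
have Hk' : (k < p)%N by apply: ltnW.
have E : f^`()`_k = f`_k *+ p.
  rewrite /f deriv_exp s_deriv mulrBl coefMn coefB.
  rewrite -scalerAl coefZ coefXnM.
  have -> : (k < p.-1)%N by lia.
  rewrite mulr0 subr0.
  by rewrite -exprS prednK ?prime_gt0.
rewrite coef_deriv IH // in E.
have k0 : (k.+1%:R : K) != 0 by apply: natr_neq0.
rewrite -(mulr_natr (f`_k.+1)) -(mulr_natr (_ * a k)) in E.
apply: (mulIf k0); rewrite E -[RHS]mulrA aS exprS.
by rewrite mulrC mulrA.
Qed.

Lemma sp_coef k : (k < p)%N -> sp`_k = (k == 0)%:R.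
Proof.
move=> Hk; rewrite /sp coef_sum -(prednK (prime_gt0 pp)) big_ord_recl /=.
rewrite coefZ coefXn mul0n a0 mul1r big1 ?addr0 // => i _.
rewrite coefZ coefXn /bump /= add1n.
rewrite (_ : (k == _) = false) ?mulr0 //.
apply/negbTE/eqP => E; move: Hk; rewrite E; nia.
Qed.

Definition Dp := f - sp.

Lemma Dp_frob : polyO Dp 1.
Proof.
rewrite /Dp /f /s poly_def /sp.
apply: (pOfrob pp HL) => i Hi; [exact: (a_int pp HL)|exact: (a_frob pp HL)].
Qed.

End Der.

Section Est.
Variables (p : nat) (K : fieldType) (v : K -> rat) (pw : rat -> K).
Hypothesis pp : prime p.
Hypothesis p3 : (3 <= p)%N.
Hypothesis HL : Lp_model p v pw.

Notation O := (bigO v).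
Notation polyO := (polyO v).
Notation a := (@a K).
Notation s := (@s p K).
Notation sp := (@sp p K).

Lemma eval_O (P : {poly K}) x c : (forall i, O (P`_i * x ^+ i) c) -> O P.[x] c.
Proof. by move=> H; rewrite horner_coef; apply: (Osum HL) => i _. Qed.

Lemma eval_O0 (P : {poly K}) x c : polyO P c -> O x 0 -> O P.[x] c.
Proof.
move=> HP Hx; apply: eval_O => i; rewrite -[c]addr0; apply: (OM HL) => //.
exact: (OX0 HL).
Qed.

Lemma s_eval y : s.[y] = \sum_(i < p) a i * y ^+ i.
Proof. by rewrite /s horner_poly. Qed.

Lemma sp_eval y : sp.[y] = s.[y ^+ p].
Proof.
rewrite s_eval /sp horner_sum; apply: eq_bigr => i _.
by rewrite hornerZ hornerXn mulnC exprM.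
Qed.

Lemma Dp_eval y : (Dp p K).[y] = s.[y] ^+ p - s.[y ^+ p].
Proof. by rewrite /Dp hornerD hornerN /f horner_exp sp_eval. Qed.

Lemma frob_eval y : O y 0 -> O (s.[y] ^+ p - s.[y ^+ p]) 1.
Proof. by move=> Hy; rewrite -Dp_eval; apply: eval_O0 => //; apply: (Dp_frob pp HL). Qed.

Lemma s_int y : O y 0 -> O s.[y] 0.
Proof.
move=> Hy; rewrite s_eval; apply: (Osum HL) => i _; rewrite -[0]addr0.
by apply: (OM HL); [apply: (a_int pp HL)|apply: (OX0 HL)].
Qed.

Lemma pow_step U V c : O U 0 -> O V 0 -> O (U - V) c -> 1 <= c ->
  O (U ^+ p - V ^+ p) (c + 1).
Proof.
move=> HU HV HD c1.
have -> : U = V + (U - V) by rewrite addrC subrK.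
set D := U - V; rewrite exprDn big_ord_recl /= subn0 expr0 mulr1 bin0 mulr1n.
rewrite addrC addKr; apply: (Osum HL) => i _.
rewrite (_ : bump 0 i = i.+1); last by rewrite /bump leq0n add1n.
rewrite -(mulr_natl (V ^+ _ * _)).
have c0 : 0 <= c by apply: le_trans c1.
have [Hi|Hi] := ltnP i.+1 p.
  have HC : O ('C(p, i.+1)%:R) 1 by apply: (Onat pp HL); apply: prime_dvd_bin.
  have HVp : O (V ^+ (p - i.+1)) 0 by apply: (OX0 HL).
  have HDp : O (D ^+ i.+1) c.
    by apply: Ole (OX HL i.+1 HD) _; rewrite ler_peMl // ler1n.
  by apply: Ole (OM HL HC (OM HL HVp HDp)) _; rewrite add0r addrC.
have Ei : i.+1 = p by apply/eqP; rewrite eqn_leq Hi ltn_ord.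
rewrite Ei subnn binn mul1r expr0 mul1r.
apply: Ole (OX HL p HD) _.
have : (3%:R : rat) <= p%:R by rewrite ler_nat.
move=> H3; nra.
Qed.



Lemma pow_iter U V j : O U 0 -> O V 0 -> O (U - V) 1 ->
  O (U ^+ (p ^ j) - V ^+ (p ^ j)) (1 + j%:R).
Proof.
move=> HU HV HD; elim: j => [|j IH]; first by rewrite !expn0 !expr1 addr0.
rewrite expnSr !exprM -natr1 addrA.
apply: pow_step => //; try exact: (OX0 HL).
by rewrite lerDl.
Qed.

Lemma chain k z : O z 0 ->
  O (s.[z] ^+ (p ^ k.+1) - s.[z ^+ (p ^ k)] ^+ p) 2.
Proof.
elim: k z => [|k IH] z Hz; first by rewrite expn0 expr1 expn1 subrr; left.
have Hw : O (z ^+ p) 0 by apply: (OX0 HL).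
have := IH _ Hw.
have -> : (z ^+ p) ^+ (p ^ k) = z ^+ (p ^ k.+1) by rewrite -exprM -expnS.
move=> H1.
have -> : s.[z] ^+ (p ^ k.+2) - s.[z ^+ (p ^ k.+1)] ^+ p =
  (s.[z] ^+ (p ^ k.+2) - s.[z ^+ p] ^+ (p ^ k.+1)) +
  (s.[z ^+ p] ^+ (p ^ k.+1) - s.[z ^+ (p ^ k.+1)] ^+ p) by ring.
apply: (OD HL) => //.
rewrite [(p ^ k.+2)%N]expnS exprM.
apply: Ole (pow_iter k.+1 _ _ _) _.
- apply: (OX0 HL); exact: s_int.
- exact: s_int.
- exact: frob_eval.
have : (1 : rat) <= k.+1%:R by rewrite ler1n.
by move=> H; lra.
Qed.


Lemma fine x : O x ((p * (p - 1))%N%:R)^-1 ->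
  O (s.[x] ^+ p - s.[x ^+ p] - p%:R * x) (1 + ((p - 1)%N%:R)^-1).
Proof.
move=> Hx.
set q : rat := (p - 1)%N%:R.
have q2 : (2 : rat) <= q by rewrite /q ler_nat; lia.
have q0 : 0 < q by apply: lt_le_trans q2.
have pq : (p * (p - 1))%N%:R = p%:R * q :> rat by rewrite natrM.
have pr0 : (0 : rat) < p%:R by rewrite ltr0n prime_gt0.
have e0 : (0 : rat) <= ((p * (p - 1))%N%:R)^-1 by rewrite invr_ge0 ler0n.
have Hx0 : O x 0 by apply: Ole Hx e0.
have -> : s.[x] ^+ p - s.[x ^+ p] - p%:R * x = (Dp p K - p%:R *: 'X).[x].
  by rewrite hornerD hornerN hornerZ hornerX Dp_eval.
apply: eval_O => i; rewrite coefB coefZ coefX.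
have [Hi|Hi] := ltnP i p.
  rewrite /Dp coefB (f_coef pp HL Hi) (sp_coef K pp Hi).
  case: i Hi => [|[|i]] Hi.
  - by rewrite expr0 mul1r a0 subrr mulr0 subr0 mul0r; left.
  - by rewrite /= expr1 a1 !mulr1 subr0 subrr mul0r; left.
  rewrite mulr0 !subr0.
  apply: Ole (OM HL (OM HL (OX HL i.+2 (_ : O p%:R 1)) (a_int pp HL Hi)) (OX0 HL i.+2 Hx0)) _.
    by right; rewrite (vp pp HL).
  rewrite mulr1 !addr0.
  have : q^-1 <= 1 by rewrite invf_le1 //; apply: le_trans q2; rewrite ler1n.
  have : (2 : rat) <= i.+2%:R by rewrite ler_nat.
  move=> H1 H2; lra.
have i1 : (i == 1)%N = false by apply/negbTE; rewrite neq_ltn; apply/orP; right; apply: leq_trans Hi; lia.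
rewrite i1 mulr0 subr0.
apply: Ole (OM HL (Dp_frob pp HL i) (OX HL i Hx)) _.
rewrite lerD2l pq.
have -> : q^-1 = p%:R * (p%:R * q)^-1.
  by field; rewrite -/q !gt_eqF.
by rewrite ler_pM2r ?ler_nat // invr_gt0 mulr_gt0.
Qed.

End Est.

Section Fin.
Variables (p : nat) (K : fieldType) (v : K -> rat) (pw : rat -> K).
Hypothesis pp : prime p.
Hypothesis p3 : (3 <= p)%N.
Hypothesis HL : Lp_model p v pw.

Notation O := (bigO v).

Lemma pwD x y : pw (x + y) = pw x * pw y.
Proof. by case: HL. Qed.
Lemma pw1 : pw 1 = p%:R.
Proof. by case: HL. Qed.
Lemma pwv x : pw x != 0 /\ v (pw x) = x.
Proof. by case: HL => _ _ _ _; apply. Qed.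

Lemma pw0 : pw 0 = 1.
Proof.
have [n0 _] := pwv 0.
by apply: (mulIf n0); rewrite mul1r -pwD addr0.
Qed.

Lemma pwn k y : pw (k%:R * y) = pw y ^+ k.
Proof.
elim: k => [|k IH]; first by rewrite mul0r pw0 expr0.
by rewrite -natr1 mulrDl mul1r pwD IH exprSr.
Qed.

Lemma vX a k : a != 0 -> v (a ^+ k) = k%:R * v a.
Proof.
move=> an; elim: k => [|k IH]; first by rewrite expr0 (v1 HL) mul0r.
rewrite exprSr (vM HL) ?expf_neq0 // IH -natr1 mulrDl mul1r.
by [].
Qed.

Lemma O_unit a k : (0 < k)%N -> a ^+ k = 1 -> O a 0 /\ O a^-1 0 /\ a != 0.
Proof.
move=> k0 H.
have an : a != 0 by apply/eqP => a0; move: H; rewrite a0 expr0n gtn_eqF //; apply/eqP; rewrite eq_sym oner_eq0.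
have va : v a = 0.
  have := vX k an; rewrite H (v1 HL) => /eqP; rewrite eq_sym mulf_eq0 pnatr_eq0 gtn_eqF //= => /eqP.
  by [].
by split; [right; rewrite va|split => //; right; rewrite (vV HL an) va oppr0].
Qed.

Lemma O_zpw z y : O z 0 -> O (z * pw y) y.
Proof.
move=> H1; have [n0 vy] := pwv y.
have H2 : O (pw y) y by right; rewrite vy.
by apply: Ole (OM HL H1 H2) _; rewrite add0r.
Qed.

Lemma p_odd : odd p.
Proof. by case: (even_prime pp) => // p2; move: p3; rewrite p2. Qed.

Lemma sign_oddpow (m : nat) : odd m -> (-1 : K) ^+ m = -1.
Proof. by move=> om; rewrite -signr_odd om expr1. Qed.

Lemma zeta_facts (zeta : K) : (2 * (p - 1))%N.-primitive_root zeta ->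
  zeta ^+ (p - 1) = -1 /\ O zeta 0 /\ zeta != 0.
Proof.
move=> pr.
have p1 : (0 < p - 1)%N by lia.
have H2 : zeta ^+ (2 * (p - 1)) = 1 by apply: prim_expr_order.
have k0 : (0 < 2 * (p - 1))%N by lia.
have [Hz [_ zn]] := O_unit k0 H2.
split => //.
have w1 : zeta ^+ (p - 1) != 1.
  rewrite -(prim_order_dvd pr); apply/negP => /dvdn_leq; lia.
have : (zeta ^+ (p - 1) - 1) * (zeta ^+ (p - 1) + 1) = 0.
  by rewrite -subr_sqr expr1n -exprM mulnC H2 subrr.
move/eqP; rewrite mulf_eq0 subr_eq0 (negbTE w1) /= addr_eq0 => /eqP.
by [].
Qed.

Lemma zeta_pow (zeta : K) j : (2 * (p - 1))%N.-primitive_root zeta ->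
  zeta ^+ (p ^ j) = (-1) ^+ j * zeta.
Proof.
move=> pr; have [z1 _] := zeta_facts pr.
elim: j => [|j IH]; first by rewrite expn0 expr1 expr0 mul1r.
rewrite expnSr exprM IH exprMn -exprM mulnC exprM (sign_oddpow p_odd).
have -> : zeta ^+ p = - zeta.
  by rewrite -(subnK (prime_gt0 pp)) exprD z1 expr1 mulN1r.
by rewrite exprS mulrN mulN1r mulNr.
Qed.

End Fin.

End Helpers.
Import Helpers.
Unset Implicit Arguments.

Theorem proposition3p15 (p n : nat) (K : fieldType) (v : K -> rat)
  (pw : rat -> K) (zeta : K) (t : nat -> K) :
  prime p -> (3 <= p)%N -> (2 <= n)%N ->
  Lp_model p v pw ->
  (2 * (p - 1))%N.-primitive_root zeta ->
  (forall l : nat, (1 <= l < p)%N -> teich_of p v (l`!) (t l)) ->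
  bigO v
    ((\sum_(l < p)
        ((-1) ^+ (l * n) / (l`!)%:R) * zeta ^+ l
          * pw (l%:R / (p ^ (n - 1) * (p - 1))%N%:R)) ^+ (p ^ (n - 1)) - 1
     - (\sum_(1 <= l < p) ((-1) ^+ l / t l) * zeta ^+ l * pw (l%:R / (p - 1)%N%:R)
        + zeta * pw (1 + 1 / (p * (p - 1))%N%:R)))
    (1 + 1 / (p - 1)%N%:R).
Proof.
move=> pp p3 n2 HL pr Ht.
have [z1 [Hz zn]] := zeta_facts pp p3 HL pr.
set N := (p ^ (n - 1) * (p - 1))%N.
set P := pw (N%:R^-1).
set pi := (-1) ^+ n * zeta * P.
have E1 : \sum_(l < p) ((-1) ^+ (l * n) / (l`!)%:R) * zeta ^+ l * pw (l%:R / N%:R)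
          = (s p K).[pi].
  rewrite s_eval; apply: eq_bigr => l _.
  rewrite (pwn HL) [(l * n)%N]mulnC exprM /pi !exprMn /a.
  by ring.
rewrite E1; clear E1.
have Hpow j : pi ^+ (p ^ j) = (-1) ^+ n * (-1) ^+ j * zeta * pw ((p ^ j)%N%:R * N%:R^-1).
  rewrite /pi !exprMn (zeta_pow pp p3 HL j pr) (pwn HL) -exprM mulnC exprM.
  rewrite (sign_oddpow K (_ : odd (p ^ j))); last by rewrite oddX (p_odd pp p3) orbT.
  by rewrite mulrA.
have p10 : ((p - 1)%N%:R : rat) != 0 by rewrite pnatr_eq0; lia.
have pn0 : ((p ^ (n - 2))%N%:R : rat) != 0 by rewrite pnatr_eq0 expn_eq0; apply/nandP; left; rewrite -lt0n prime_gt0.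
have pr0 : (p%:R : rat) != 0 by rewrite pnatr_eq0 -lt0n prime_gt0.
have pe : (p ^ (n - 1) = p ^ (n - 2) * p)%N by rewrite -expnSr; have -> : (n - 1 = (n - 2).+1)%N by lia.
have Ex1 : pi ^+ (p ^ (n - 1)) = - zeta * pw ((p - 1)%N%:R^-1).
  rewrite Hpow -exprD (sign_oddpow K (_ : odd (n + (n - 1)))); last first.
    have -> : (n + (n - 1) = ((n - 1) * 2).+1)%N by lia.
    by rewrite /= oddM andbF.
  rewrite mulN1r; congr (- zeta * pw _).
  rewrite /N natrM pe natrM; field.
  by rewrite pn0 pr0 p10.
have Ex2 : pi ^+ (p ^ (n - 2)) = zeta * pw ((p * (p - 1))%N%:R^-1).
  rewrite Hpow -exprD (_ : (n + (n - 2) = 2 * (n - 1))%N); last by lia.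
  rewrite exprM sqrrN !expr1n mul1r; congr (zeta * pw _).
  rewrite /N natrM pe !natrM; field.
  by rewrite pn0 pr0 p10.
set x1 := - zeta * pw ((p - 1)%N%:R^-1).
set x2 := zeta * pw ((p * (p - 1))%N%:R^-1).
have Hx1 : bigO v x1 ((p - 1)%N%:R^-1).
  apply: (O_zpw HL); rewrite -mulN1r -[0]add0r; apply: (OM HL) => //.
  by right; rewrite (vN1 HL).
have Hx2 : bigO v x2 ((p * (p - 1))%N%:R^-1) by apply: (O_zpw HL).
have Hpi : bigO v pi 0.
  have H : bigO v pi (N%:R^-1).
    apply: (O_zpw HL); rewrite -[0]add0r; apply: (OM HL) => //.
    by apply: (OX0 HL); right; rewrite (vN1 HL).
  by apply: Ole H _; rewrite invr_ge0 ler0n.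
have ER : \sum_(1 <= l < p) ((-1) ^+ l / t l) * zeta ^+ l * pw (l%:R / (p - 1)%N%:R)
   = \sum_(1 <= l < p) (t l)^-1 * x1 ^+ l.
  apply: eq_bigr => l _; rewrite /x1 (pwn HL) exprMn (exprNn zeta).
  by ring.
have EC : zeta * pw (1 + 1 / (p * (p - 1))%N%:R) = p%:R * x2.
  by rewrite (pwD HL) (pw1 HL) mul1r /x2 mulrCA.
rewrite ER EC; clear ER EC.
have C1 := chain pp p3 HL (n - 2) Hpi.
rewrite (_ : (n - 2).+1 = n - 1)%N in C1; last by lia.
rewrite Ex2 in C1.
have C2 := fine pp p3 HL Hx2.
have E21 : x2 ^+ p = x1.
  by rewrite /x2 -Ex2 -exprM -expnSr (_ : (n - 2).+1 = n - 1)%N ?Ex1 //; lia.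
rewrite E21 in C2.
set c := 1 + _.
have C3 : bigO v ((s p K).[x1] - 1 - \sum_(1 <= l < p) (t l)^-1 * x1 ^+ l) c.
  rewrite s_eval -(big_mkord xpredT (fun i => a K i * x1 ^+ i)) big_ltn ?prime_gt0 //.
  rewrite expr0 mulr1 /a fact0 invr1 [1 + _]addrC addrK -sumrB big_nat_cond.
  apply: (Osum HL) => l /andP [/andP [l1 lp] _].
  have [tp tO] := Ht l (introT andP (conj l1 lp)).
  have p1 : (0 < p - 1)%N by lia.
  have [tI [tVI tn]] := O_unit HL p1 tp.
  have [fn _] := vnat0 pp HL (fact_ndvd pp lp).
  have -> : (l`!%:R)^-1 * x1 ^+ l - (t l)^-1 * x1 ^+ l
      = (t l - l`!%:R) * ((l`!%:R)^-1 * (t l)^-1) * x1 ^+ l.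
    by field; rewrite fn tn.
  apply: Ole (OM HL (OM HL tO (OM HL (a_int pp HL lp) tVI)) (OX HL l Hx1)) _.
  rewrite !addr0 /c mul1r lerD2l ler_peMl ?ler1n //.
  by rewrite invr_ge0 ler0n.
have -> : (s p K).[pi] ^+ (p ^ (n - 1)) - 1 -
    (\sum_(1 <= l < p) (t l)^-1 * x1 ^+ l + p%:R * x2) =
  ((s p K).[pi] ^+ (p ^ (n - 1)) - (s p K).[x2] ^+ p) +
  ((s p K).[x2] ^+ p - (s p K).[x1] - p%:R * x2) +
  ((s p K).[x1] - 1 - \sum_(1 <= l < p) (t l)^-1 * x1 ^+ l) by ring.
apply: (OD HL) => //; apply: (OD HL) => //.
apply: Ole C1 _.
have : ((p - 1)%N%:R : rat)^-1 <= 1.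
  by rewrite invf_le1 ?ler1n ?ltr0n; lia.
rewrite /c mul1r; lra.
by rewrite /c mul1r.
Qed.
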